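(* There exists $r_0>0$ such that for every $0\le r\le r_0$, \[ F(\beta)=\int_0^\beta (r^2+2\sin^2y)^{1/2}\Bigl(\frac34-\sin^2y\Bigr)dy\ \ge\ 0\qquad\text{for all }\beta\ge0. \] Moreover, if $0<r\le r_0$, then $F(\beta)=0$ (for $\beta\ge0$) if and only if $\beta=0$. *)

(* Defs.v *)
From Stdlib Require Import Reals.
From Coquelicot Require Import Coquelicot.
Open Scope R_scope.

Definition integrand (r y : R) : R :=
  sqrt (r ^ 2 + 2 * (sin y) ^ 2) * (3 / 4 - (sin y) ^ 2).

Definition F (r beta : R) : R := RInt (integrand r) 0 beta.

(* Main.v *)
Require Import Defs.
From Stdlib Require Import Reals Lra Psatz.
From Coquelicot Require Import Coquelicot.
Open Scope R_scope.

Lemma integrand_cont r x : continuous (integrand r) x.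
Proof.
  apply continuity_pt_filterlim. unfold integrand.
  apply continuity_pt_mult.
  - apply (continuity_pt_comp (fun y => r ^ 2 + 2 * sin y ^ 2) sqrt).
    + apply derivable_continuous_pt; reg.
    + apply continuity_pt_sqrt. nra.
  - apply derivable_continuous_pt; reg.
Qed.

Lemma integrand_ex r a b : ex_RInt (integrand r) a b.
Proof. apply (@ex_RInt_continuous R_CompleteNormedModule). intros; apply integrand_cont. Qed.

Definition P (k r y : R) := sqrt 2 * (-(cos y)^3/3 + cos y/4) + k*r^2*(y/4 + sin y * cos y/2).
Definition A (k r y : R) := sqrt 2 * sin y * (3/4 - sin y^2) + k*r^2*(3/4 - sin y ^2).

Lemma RInt_A k r a b : RInt (A k r) a b = P k r b - P k r a.
Proof.
  apply is_RInt_unique.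
  apply (is_RInt_derive (P k r) (A k r)).
  - intros x _. unfold P, A. auto_derive; [auto|]. 
    pose proof (sin2_cos2 x) as Hsc. unfold Rsqr in Hsc.
    replace (cos x * (cos x * 1)) with (1 - sin x ^ 2) by nra.
    replace (1 * cos x * cos x) with (1 - sin x ^ 2) by nra.
    match goal with |- ?a = ?b => change (@eq R a b) end. change RinvImpl.Rinv with Rinv. field.
  - intros y _. apply (@ex_derive_continuous R_AbsRing R_NormedModule). unfold A. auto_derive. auto.
Qed.
Lemma sqrt2_facts : sqrt 2 * sqrt 2 = 2 /\ 0 <= sqrt 2 /\ sqrt 2 <= 3/2.
Proof.
  assert (H := sqrt_sqrt 2 ltac:(lra)). assert (H0 := sqrt_pos 2).
  repeat split; try lra. nra.
Qed.

Lemma lb1 r s : 0 <= r <= 1 -> 0 <= s <= 1 -> s^2 <= 3/4 ->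
  sqrt 2 * s * (3/4 - s^2) + 1/4 * r^2 * (3/4 - s^2) <= sqrt (r^2 + 2 * s^2) * (3/4 - s^2).
Proof.
  intros Hr Hs Hs2. destruct sqrt2_facts as (H2 & H2p & H2u).
  assert (sqrt 2 * s + r^2/4 <= sqrt (r^2 + 2*s^2)).
  { rewrite <- (sqrt_pow2 (sqrt 2 * s + r^2/4)) by nra. apply sqrt_le_1_alt.
    assert (sqrt 2 * s <= 3/2) by nra. assert (r^2 <= 1) by nra.
    assert (0 <= r^2) by nra.
    assert (r^2 * (sqrt 2 * s) <= r^2 * (3/2)) by nra.
    assert (r^2 * r^2 <= r^2) by nra.
    replace ((sqrt 2 * s + r ^ 2 / 4) ^ 2) with (sqrt 2 * sqrt 2 * s^2 + r^2 * (sqrt 2 * s) / 2 + r^2*r^2/16) by field.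
    rewrite H2. lra. }
  nra.
Qed.

Lemma lb2 r s : 0 <= r -> 0 <= s -> 3/4 <= s^2 ->
  sqrt 2 * s * (3/4 - s^2) + 1/2 * r^2 * (3/4 - s^2) <= sqrt (r^2 + 2 * s^2) * (3/4 - s^2).
Proof.
  intros Hr Hs Hs2. destruct sqrt2_facts as (H2 & H2p & H2u).
  assert (sqrt (r^2 + 2*s^2) <= sqrt 2 * s + r^2/2).
  { rewrite <- (sqrt_pow2 (sqrt 2 * s + r^2/2)) by nra. apply sqrt_le_1_alt.
    assert (1 <= sqrt 2 * s).
    { assert ((sqrt 2 * s) * (sqrt 2 * s) >= 1) by (replace ((sqrt 2 * s) * (sqrt 2 * s)) with (sqrt 2 * sqrt 2 * s^2) by ring; nra). nra. }
    assert (0 <= r^2) by nra.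
    assert (r^2 * 1 <= r^2 * (sqrt 2 * s)) by nra.
    replace ((sqrt 2 * s + r ^ 2 / 2) ^ 2) with (sqrt 2 * sqrt 2 * s^2 + r^2 * (sqrt 2 * s) + r^2*r^2/4) by field.
    rewrite H2. nra. }
  nra.
Qed.

Lemma cos_2PI3 : cos (2*PI/3) = -1/2.
Proof. replace (2*PI/3) with (PI - PI/3) by field. rewrite Rtrigo_facts.cos_pi_minus, cos_PI3. lra. Qed.
Lemma sin_2PI3 : sin (2*PI/3) = sqrt 3/2.
Proof. replace (2*PI/3) with (PI - PI/3) by field. rewrite sin_PI_x, sin_PI3. lra. Qed.

Lemma PI_lb : 8/3 <= PI.
Proof.
  destruct (PI_ineq 0) as [H _]. simpl in H. unfold tg_alt, PI_tg in H. simpl in H. lra.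
Qed.

Lemma sqrt3_ub : sqrt 3 < 16/9.
Proof. assert (H := sqrt_sqrt 3 ltac:(lra)). assert (H0 := sqrt_pos 3). nra. Qed.

Lemma sin_sq_cos y : sin y ^ 2 = 1 - cos y ^ 2.
Proof. pose proof (sin2_cos2 y). unfold Rsqr in H. nra. Qed.

Lemma reg1 y : 0 <= y <= PI/3 -> 0 <= sin y /\ 1/2 <= cos y.
Proof.
  intros H. pose proof PI_RGT_0. split. apply sin_ge_0; lra.
  rewrite <- cos_PI3. apply cos_decr_1; lra.
Qed.

Lemma reg2 y : PI/3 <= y <= 2*PI/3 -> 0 <= sin y /\ -1/2 <= cos y <= 1/2.
Proof.
  intros H. pose proof PI_RGT_0. split. apply sin_ge_0; lra. split.
  rewrite <- cos_2PI3. apply cos_decr_1; lra.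
  rewrite <- cos_PI3. apply cos_decr_1; lra.
Qed.

Lemma reg3 y : 2*PI/3 <= y <= PI -> cos y <= -1/2.
Proof.
  intros H. pose proof PI_RGT_0. rewrite <- cos_2PI3. apply cos_decr_1; lra.
Qed.

Lemma A_ex k r a b : ex_RInt (A k r) a b.
Proof.
  apply (@ex_RInt_continuous R_CompleteNormedModule). intros y _.
  apply (@ex_derive_continuous R_AbsRing R_NormedModule). unfold A. auto_derive. auto.
Qed.

Lemma ptw1 r x : 0 <= r <= 1 -> 0 <= x <= PI/3 -> A (1/4) r x <= integrand r x.
Proof.
  intros Hr Hx. destruct (reg1 x Hx) as [Hs Hc]. pose proof (sin_sq_cos x).
  unfold A, integrand. apply lb1; auto; nra.
Qed.

Lemma ptw2 r x : 0 <= r -> PI/3 <= x <= 2*PI/3 -> A (1/2) r x <= integrand r x.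
Proof.
  intros Hr Hx. destruct (reg2 x Hx) as [Hs Hc]. pose proof (sin_sq_cos x).
  unfold A, integrand. apply lb2; auto; nra.
Qed.

Lemma F2PI3 r : 0 <= r <= 1 -> r^2 * (2*PI - 3*sqrt 3)/32 <= F r (2*PI/3).
Proof.
  intros Hr. pose proof PI_RGT_0. unfold F.
  rewrite <- (RInt_Chasles (integrand r) 0 (PI/3) (2*PI/3)) by apply integrand_ex.
  assert (H1: RInt (A (1/4) r) 0 (PI/3) <= RInt (integrand r) 0 (PI/3)).
  { apply RInt_le; [lra | apply A_ex | apply integrand_ex |].
    intros x Hx. apply ptw1; lra. }
  assert (H2: RInt (A (1/2) r) (PI/3) (2*PI/3) <= RInt (integrand r) (PI/3) (2*PI/3)).
  { apply RInt_le; [lra | apply A_ex | apply integrand_ex |].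
    intros x Hx. apply ptw2; lra. }
  rewrite !RInt_A in *. unfold P in *.
  rewrite cos_PI3, sin_PI3, cos_2PI3, sin_2PI3, cos_0, sin_0 in *.
  change (plus (RInt (integrand r) 0 (PI / 3)) (RInt (integrand r) (PI / 3) (2 * PI / 3)))
    with (RInt (integrand r) 0 (PI / 3) + RInt (integrand r) (PI / 3) (2 * PI / 3)).
  assert (E: forall a b : R, a <= RInt (integrand r) 0 (PI / 3) -> b <= RInt (integrand r) (PI / 3) (2 * PI / 3) -> a + b <= RInt (integrand r) 0 (PI / 3) + RInt (integrand r) (PI / 3) (2 * PI / 3)) by (intros; lra).
  eapply Rle_trans; [| apply E; eassumption].
  right. field.
Qed.

Lemma key_pos : 0 < 2*PI - 3*sqrt 3.
Proof. pose proof PI_lb. pose proof sqrt3_ub. lra. Qed.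

Lemma F2PI3_pos r : 0 <= r <= 1 -> 0 <= F r (2*PI/3) /\ (0 < r -> 0 < F r (2*PI/3)).
Proof.
  intros Hr. pose proof (F2PI3 r Hr). pose proof key_pos. split.
  - assert (0 <= r^2 * (2*PI - 3*sqrt 3)) by (apply Rmult_le_pos; nra). lra.
  - intros. assert (0 < r^2 * (2*PI - 3*sqrt 3)) by (apply Rmult_lt_0_compat; nra). lra.
Qed.

Lemma base r : 0 <= r <= 1 -> forall b, 0 <= b <= PI ->
  0 <= F r b /\ (0 < r -> 0 < b -> 0 < F r b).
Proof.
  intros Hr b Hb. pose proof PI_RGT_0. destruct (F2PI3_pos r Hr) as [G1 G2].
  destruct (Rle_lt_dec b (PI/3)) as [Hb1|Hb1].
  - assert (H1: RInt (A (1/4) r) 0 b <= F r b).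
    { apply RInt_le; [lra | apply A_ex | apply integrand_ex |].
      intros x Hx. apply ptw1; lra. }
    rewrite RInt_A in H1. unfold P in H1. rewrite cos_0, sin_0 in H1.
    destruct (reg1 b ltac:(lra)) as [Hs Hc].
    pose proof (sin_sq_cos b). destruct sqrt2_facts as (_ & H2p & _).
    assert (Hq: 0 <= sqrt 2 * ((1 - cos b) * (cos b + 1/2)^2 / 3)).
    { apply Rmult_le_pos; auto. assert (cos b <= 1) by nra. 
      apply Rmult_le_pos; [|lra]. apply Rmult_le_pos; nra. }
    assert (Eq: sqrt 2 * (- cos b ^ 3 / 3 + cos b / 4) + 1 / 4 * r ^ 2 * (b / 4 + sin b * cos b / 2) -
      (sqrt 2 * (- 1 ^ 3 / 3 + 1 / 4) + 1 / 4 * r ^ 2 * (0 / 4 + 0 * 1 / 2)) =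
      sqrt 2 * ((1 - cos b) * (cos b + 1/2)^2 / 3) + r^2 * (b/4 + sin b * cos b/2) / 4) by field.
    rewrite Eq in H1. split.
    + assert (0 <= r^2 * (b/4 + sin b * cos b/2)) by (apply Rmult_le_pos; nra). lra.
    + intros Hr0 Hb0. assert (0 < r^2 * (b/4 + sin b * cos b/2)) by (apply Rmult_lt_0_compat; nra). lra.
  - destruct (Rle_lt_dec b (2*PI/3)) as [Hb2|Hb2].
    + assert (H3: RInt (integrand r) b (2*PI/3) <= RInt (fun _ => 0) b (2*PI/3)).
      { apply RInt_le; [lra | apply integrand_ex | apply ex_RInt_const |].
        intros x Hx. destruct (reg2 x ltac:(lra)) as [Hs Hc]. pose proof (sin_sq_cos x).
        unfold integrand. assert (0 <= sqrt (r ^ 2 + 2 * sin x ^ 2)) by apply sqrt_pos.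
        assert (3/4 - sin x ^ 2 <= 0) by nra. nra. }
      rewrite RInt_const in H3. change (scal (2 * PI / 3 - b) 0) with ((2 * PI / 3 - b) * 0) in H3.
      assert (E: F r (2*PI/3) = F r b + RInt (integrand r) b (2*PI/3)).
      { unfold F. rewrite <- (RInt_Chasles (integrand r) 0 b (2*PI/3)) by apply integrand_ex. reflexivity. }
      split; [lra | intros; specialize (G2 H0); lra].
    + assert (H3: 0 <= RInt (integrand r) (2*PI/3) b).
      { apply RInt_ge_0; [lra | apply integrand_ex |].
        intros x Hx. pose proof (reg3 x ltac:(lra)). pose proof (sin_sq_cos x).
        unfold integrand. assert (0 <= sqrt (r ^ 2 + 2 * sin x ^ 2)) by apply sqrt_pos.
        assert (0 <= 3/4 - sin x ^ 2) by nra. nra. }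
      assert (E: F r b = F r (2*PI/3) + RInt (integrand r) (2*PI/3) b).
      { unfold F. rewrite <- (RInt_Chasles (integrand r) 0 (2*PI/3) b) by apply integrand_ex. reflexivity. }
      split; [lra | intros; specialize (G2 H0); lra].
Qed.

Lemma shift r b : F r (b + PI) = F r PI + F r b.
Proof.
  assert (Hs: RInt (integrand r) PI (b+PI) = RInt (integrand r) 0 b).
  { pose proof (RInt_comp_lin (integrand r) 1 PI 0 b (integrand_ex _ _ _)) as H.
    replace (1*0+PI) with PI in H by ring. replace (1*b+PI) with (b+PI) in H by ring.
    rewrite <- H. apply RInt_ext. intros x _.
    match goal with |- ?a = ?c => change (@eq R a c) end.
    change (scal 1 (integrand r (1*x+PI))) with (1 * integrand r (1*x+PI)).
    replace (1*x+PI) with (x+PI) by ring. unfold integrand. rewrite neg_sin. replace ((- sin x) ^ 2) with (sin x ^ 2) by ring. rewrite Rmult_1_l. reflexivity. }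
  unfold F. rewrite <- (RInt_Chasles (integrand r) 0 PI (b+PI)) by apply integrand_ex.
  rewrite Hs. reflexivity.
Qed.

Lemma all_n r : 0 <= r <= 1 -> forall n : nat, forall b, 0 <= b <= INR (S n) * PI ->
  0 <= F r b /\ (0 < r -> 0 < b -> 0 < F r b).
Proof.
  intros Hr n. pose proof PI_RGT_0. induction n as [|n IH]; intros b Hb.
  - apply base; auto. simpl in Hb. lra.
  - destruct (Rle_lt_dec b PI) as [Hb1|Hb1]. apply base; auto; lra.
    rewrite S_INR in Hb.
    replace b with ((b - PI) + PI) by ring. rewrite shift.
    destruct (IH (b - PI) ltac:(split; nra)) as [J1 J2].
    destruct (base r Hr PI ltac:(lra)) as [K1 K2].
    split; [lra | intros; specialize (J2 H0 ltac:(lra)); lra].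
Qed.

Theorem lemma1 :
  exists r0 : R, 0 < r0 /\
    (forall r : R, 0 <= r <= r0 -> forall beta : R, 0 <= beta -> 0 <= F r beta) /\
    (forall r : R, 0 < r <= r0 -> forall beta : R, 0 <= beta -> (F r beta = 0 <-> beta = 0)).
Proof.
  assert (Hall: forall r, 0 <= r <= 1 -> forall b, 0 <= b -> 0 <= F r b /\ (0 < r -> 0 < b -> 0 < F r b)).
  { intros r Hr b Hb. pose proof PI_RGT_0.
    destruct (INR_archimed PI b H) as [n Hn].
    apply (all_n r Hr n). rewrite S_INR. split; auto. pose proof (pos_INR n). nra. }
  exists 1. split; [lra | split].
  - intros r Hr b Hb. apply Hall; auto.
  - intros r Hr b Hb. split.
    + intros HF. destruct (Rle_lt_dec b 0) as [H|H]; [lra|].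
      destruct (Hall r ltac:(lra) b Hb) as [_ H2]. specialize (H2 ltac:(lra) H). lra.
    + intros ->. unfold F. rewrite RInt_point. reflexivity.
Qed.
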